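(* Let $G$ be a connected $m$-uniform hypergraph on $n$ vertices, and let $d(G)$ be the maximum length of a path in $G$. Then $s(G)\le m^{n-d(G)-1}$ and $\gamma(G)\le(n-d(G)-1)\mathrm{cl}(m)$.
   Context: Paths: a walk $v_1,e_1,\dots,v_l,e_l,v_{l+1}$ (with $\{v_i,v_{i+1}\}\subseteq e_i$) is a path of length $l$ if its vertices and edges are distinct and $v_i\notin\bigcup_{j>i}e_j$ for $i=1,\dots,l-1$. Adjacency tensor $\mathcal{A}(G)$ (vertices $v_1,\dots,v_n$): $a_{i_1\cdots i_m}=\frac1{(m-1)!}$ if $\{v_{i_1},\dots,v_{i_m}\}$ is an edge, else $0$. For a tensor $\mathcal{A}$: eigenvectors $\mathcal{A}x^{m-1}=\lambda x^{[m-1]}$, $x\ne0$, $(\mathcal{A}x^{m-1})_i=\sum a_{ii_2\cdots i_m}x_{i_2}\cdots x_{i_m}$; $\rho(\mathcal{A})$ spectral radius. Stabilizing index $s(\mathcal{A})$: number of invertible diagonal $D$ with $d_{11}=1$ and $\mathcal{A}=D^{-(m-1)}\mathcal{A}D$, $(D^{-(m-1)}\mathcal{A}D)_{i_1\cdots i_m}=d_{i_1}^{-(m-1)}a_{i_1\cdots i_m}d_{i_2}\cdots d_{i_m}$. Stabilizing dimension $\gamma(\mathcal{A})$: composition length of the $\mathbb{Z}_m$-module of eigenvectors $y$ for $\rho(\mathcal{A})$ normalized by $y_1=1$, with operation $y\circ\hat y=D_yD_{\hat y}v_p$, $D_y=\mathrm{diag}(y_i/|y_i|)$, $v_p$ the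 positive one. $s(G)=s(\mathcal{A}(G))$, $\gamma(G)=\gamma(\mathcal{A}(G))$. $\mathrm{cl}(m)$: number of prime factors of $m$ with multiplicity. *)

(* Defs.v *)
From HB Require Import structures.
From mathcomp Require Import all_boot all_order all_algebra.
From mathcomp Require Import complex.
From mathcomp Require Import boolp classical_sets reals Rstruct.
Set Implicit Arguments. Unset Strict Implicit. Unset Printing Implicit Defensive.
Import Order.TTheory GRing.Theory Num.Theory.
Local Open Scope ring_scope.
Local Open Scope classical_set_scope.

Definition CC : Type := (Rdefinitions.R)[i].

(* ---------- hypergraphs on vertex set 'I_n (vertex v_k is k-1) ---------- *)
Definition uniform (n m : nat) (E : {set {set 'I_n}}) : Prop :=
  forall e, e \in E -> #|e| = m.

Definition hadj (n : nat) (E : {set {set 'I_n}}) : rel 'I_n :=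
  fun u v => [exists e in E, (u \in e) && (v \in e)].

Definition hconnected (n : nat) (E : {set {set 'I_n}}) : Prop :=
  forall u v : 'I_n, connect (hadj E) u v.

(* a path of length l: vertices v_1..v_{l+1} (vs 0 .. vs l) and edges
   e_1..e_l (es 0 .. es l-1); indices 0-based *)
Definition is_path (n : nat) (E : {set {set 'I_n}}) (l : nat)
  (vs : 'I_l.+1 -> 'I_n) (es : 'I_l -> {set 'I_n}) : Prop :=
  [/\ forall i, es i \in E,
      injective vs, injective es,
      (forall i : 'I_l, (vs (inord i) \in es i) /\ (vs (inord i.+1) \in es i)) &
      (forall (i : 'I_l.+1) (j : 'I_l), (i < l.-1)%N -> (i < j)%N ->
          vs i \notin es j)].

Definition has_path (n : nat) (E : {set {set 'I_n}}) (l : nat) : Prop :=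
  exists vs es, @is_path n E l vs es.

Definition max_path_length (n : nat) (E : {set {set 'I_n}}) (d : nat) : Prop :=
  has_path E d /\ forall l, has_path E l -> (l <= d)%N.

(* entry a_{i1 i2 ... im} is  A i1 js  with js k = i_{k+2} *)
Definition tensor (m n : nat) := 'I_n -> {ffun 'I_m.-1 -> 'I_n} -> CC.

Definition adj_tensor (n m : nat) (E : {set {set 'I_n}}) : tensor m n :=
  fun i js => if (i |: [set js k | k : 'I_m.-1]) \in E
              then ((m.-1)`!%:R)^-1 else 0.

Definition tapply (m n : nat) (A : tensor m n) (x : 'I_n -> CC) (i : 'I_n) : CC :=
  \sum_(js : {ffun 'I_m.-1 -> 'I_n}) A i js * \prod_(k : 'I_m.-1) x (js k).

Definition eigenpair (m n : nat) (A : tensor m n) (lam : CC) (x : 'I_n -> CC) : Prop :=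
  (exists i, x i != 0) /\ forall i, tapply A x i = lam * x i ^+ m.-1.

Definition eigenvalue (m n : nat) (A : tensor m n) (lam : CC) : Prop :=
  exists x, eigenpair A lam x.

Definition spectral_radius (m n : nat) (A : tensor m n) : Rdefinitions.R :=
  sup [set complex.Re `|lam| | lam in [set l | eigenvalue A l]].

(* D = diag(d); the condition A = D^{-(m-1)} A D, d_{11} = 1, D invertible *)
Definition stabilizing (m n : nat) (A : tensor m n) (i1 : 'I_n) (d : {ffun 'I_n -> CC}) : Prop :=
  [/\ forall i, d i != 0, d i1 = 1 &
      forall i js, A i js = (d i ^+ m.-1)^-1 * A i js * \prod_(k : 'I_m.-1) d (js k)].

Definition stab_index_le (m n : nat) (A : tensor m n) (i1 : 'I_n) (N : nat) : Prop :=
  forall s : seq {ffun 'I_n -> CC}, uniq s ->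
    (forall d, d \in s -> stabilizing A i1 d) -> (size s <= N)%N.

Definition rho_vecs (m n : nat) (A : tensor m n) (i1 : 'I_n) : set ('I_n -> CC) :=
  [set y | eigenpair A ((spectral_radius A)%:C)%C y /\ y i1 = 1].

Definition circ (n : nat) (vp y y' : 'I_n -> CC) : 'I_n -> CC :=
  fun i => (y i / `|y i|) * (y' i / `|y' i|) * vp i.

(* submodules of the Z_m-module (rho_vecs, o) with zero element v_p *)
Definition submodule (m n : nat) (A : tensor m n) (i1 : 'I_n) (vp : 'I_n -> CC)
  (S : set ('I_n -> CC)) : Prop :=
  [/\ S `<=` rho_vecs A i1, S vp &
      forall y y', S y -> S y' -> S (circ vp y y')].

(* gamma(A) <= N: every strictly increasing chain of submodules
   S_0 < S_1 < ... < S_k has length k <= N (composition length <= N),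
   where v_p is the positive normalized eigenvector for rho(A) *)
Definition stab_dim_le (m n : nat) (A : tensor m n) (i1 : 'I_n) (N : nat) : Prop :=
  forall vp, rho_vecs A i1 vp -> (forall i, 0 < vp i) ->
  forall (k : nat) (S : nat -> set ('I_n -> CC)),
    (forall i, (i <= k)%N -> submodule A i1 vp (S i)) ->
    (forall i, (i < k)%N -> S i `<` S i.+1) ->
    (k <= N)%N.

Definition cl (m : nat) : nat := \sum_(p <- primes m) logn p m.

(* Main.v *)
Require Import Defs.
From HB Require Import structures.
From mathcomp Require Import all_boot all_order all_algebra all_fingroup all_solvable all_field.
From mathcomp Require Import complex.
From mathcomp Require Import boolp classical_sets reals Rstruct.
From mathcomp Require Import zify ring.
Set Implicit Arguments. Unset Strict Implicit. Unset Printing Implicit Defensive.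
Import Order.TTheory GRing.Theory Num.Theory.
Local Open Scope ring_scope.

Lemma prim_exists n : (n > 0)%N -> {z : CC | n.-primitive_root z}.
Proof.
pose p : {poly CC} := 'X^n - 1; have [r Dp] := closed_field_poly_normal p.
move=> n_gt0; apply/sigW; rewrite (monicP _) ?monicXnsubC // scale1r in Dp.
have rn1: all n.-unity_root r by apply/allP=> z; rewrite -root_prod_XsubC -Dp.
have sz_r: (n < (size r).+1)%N.
  by rewrite -(size_prod_XsubC r id) -Dp size_XnsubC.
have [|z] := hasP (has_prim_root n_gt0 rn1 _ sz_r); last by exists z.
by rewrite -separable_prod_XsubC -Dp separable_Xn_sub_1 // pnatr_eq0 -lt0n.
Qed.

Lemma enum_set (T : finType) (B : {set T}) N : #|B| = N ->
  {js : {ffun 'I_N -> T} | [set js k | k : 'I_N] = B /\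
     forall f : T -> CC, \prod_(k < N) f (js k) = \prod_(j in B) f j}.
Proof.
move=> <-; exists [ffun k => enum_val k]; split.
  apply/setP => x; apply/imsetP/idP.
    by case=> k _ ->; rewrite ffunE enum_valP.
  by move=> Hx; exists (enum_rank_in Hx x) => //; rewrite ffunE enum_rankK_in.
by move=> f; rewrite (big_enum_val f); apply: eq_bigr => k _; rewrite ffunE.
Qed.

Lemma clE x N : (x < N)%N -> cl x = (\sum_(p < N) logn p x)%N.
Proof.
move=> HxN; rewrite /cl (bigID (fun p : 'I_N => val p \in primes x)) /=.
rewrite [X in (_ + X)%N]big1 ?addn0; last first.
  by move=> p Hp; apply/eqP; rewrite -leqn0 leqNgt logn_gt0.
rewrite -(big_mkord (fun p => p \in primes x) (fun p => logn p x)).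
rewrite -(big_filter (index_iota 0 N)); apply: perm_big; apply: uniq_perm.
- exact: primes_uniq.
- by rewrite filter_uniq // iota_uniq.
move=> p; rewrite mem_filter /index_iota subn0 mem_iota add0n; case Hp: (p \in primes x) => //=.
symmetry; move: Hp; rewrite mem_primes => /and3P [_ Hx Hd].
by apply: leq_ltn_trans HxN; apply: dvdn_leq.
Qed.

Lemma cl_dvd_le a b : (0 < b)%N -> (a %| b)%N -> (cl a <= cl b)%N.
Proof.
move=> Hb Hab; have Hab' : (a <= b)%N by apply: dvdn_leq.
rewrite (@clE a b.+1) ?(@clE b b.+1) ?ltnS //.
by apply: leq_sum => p _; apply: dvdn_leq_log.
Qed.

Lemma cl_mul a b : (0 < a)%N -> (0 < b)%N -> cl (a * b) = (cl a + cl b)%N.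
Proof.
move=> Ha Hb; set N := (a * b).+1.
have HaN : (a < N)%N by rewrite ltnS leq_pmulr.
have HbN : (b < N)%N by rewrite ltnS leq_pmull.
rewrite (clE (ltnSn _)) (clE HaN) (clE HbN) -big_split /=.
by apply: eq_bigr => p _; rewrite lognM.
Qed.

Lemma cl_ge1 q : (1 < q)%N -> (0 < cl q)%N.
Proof.
move=> Hq; rewrite (clE (ltnSn q)).
have Hp : (pdiv q < q.+1)%N by rewrite ltnS; apply: dvdn_leq; [lia|exact: pdiv_dvd].
rewrite (bigD1 (Ordinal Hp)) //= addn_gt0 logn_gt0 mem_primes pdiv_prime //= pdiv_dvd.
by rewrite andbT; lia.
Qed.

Lemma cl_dvd_lt a b : (0 < b)%N -> (a %| b)%N -> (a < b)%N -> (cl a < cl b)%N.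
Proof.
move=> Hb /dvdnP [q Hq] Hlt; subst b.
have Ha : (0 < a)%N by move: Hb; rewrite muln_gt0 => /andP [].
have Hq0 : (0 < q)%N by move: Hb; rewrite muln_gt0 => /andP [].
have Hq1 : (1 < q)%N.
  by move: Hlt; clear -Hq0; case: q Hq0 => [|[|q]] //; rewrite mul1n ltnn.
by rewrite mulnC cl_mul // -addn1 leq_add2l; apply: cl_ge1.
Qed.

Lemma cl_exp a k : (0 < a)%N -> cl (a ^ k) = (k * cl a)%N.
Proof.
move=> Ha; elim: k => [|k IH]; first by rewrite expn0 /cl big_nil.
by rewrite expnS cl_mul ?expn_gt0 ?Ha // IH mulSn.
Qed.

Section Main.
Variables (n m : nat) (Hn : (0 < n)%N) (Hm : (2 <= m)%N) (E : {set {set 'I_n}}).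
Hypotheses (Hu : uniform m E) (Hc : hconnected E).

Local Notation A := (@adj_tensor n m E).
Local Notation i1 := (Ordinal Hn).

Lemma m_gt0 : (0 < m)%N. Proof. by apply: leq_trans Hm. Qed.

Lemma card_D1 e a : e \in E -> a \in e -> #|e :\ a| = m.-1.
Proof. by move=> He Ha; have := cardsD1 a e; rewrite Ha Hu // => ->. Qed.

Lemma edge_js e a : e \in E -> a \in e ->
  {js : {ffun 'I_m.-1 -> 'I_n} | a |: [set js k | k : 'I_m.-1] = e /\
     forall f : 'I_n -> CC, \prod_(k < m.-1) f (js k) = \prod_(j in e :\ a) f j}.
Proof.
move=> He Ha; have [js [H1 H2]] := enum_set (card_D1 He Ha).
by exists js; split => //; rewrite H1 finset.setD1K.
Qed.

Definition cA : CC := ((m.-1)`!%:R)^-1.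

Lemma cA_neq0 : cA != 0.
Proof. by rewrite /cA invr_eq0 pnatr_eq0 -lt0n fact_gt0. Qed.

Lemma cA_gt0 : 0 < cA.
Proof. by rewrite /cA invr_gt0 ltr0n fact_gt0. Qed.

Lemma A_ge0 a (js : {ffun 'I_m.-1 -> 'I_n}) : 0 <= A a js.
Proof. rewrite /adj_tensor; case: ifP => _ //; exact: ltW cA_gt0. Qed.

Lemma A_edge e a (js : {ffun 'I_m.-1 -> 'I_n}) : e \in E -> a |: [set js k | k : 'I_m.-1] = e -> A a js = cA.
Proof. by move=> He Hjs; rewrite /adj_tensor Hjs He. Qed.

Definition Pv (u : 'I_n -> CC) :=
  (forall i, u i != 0) /\
  (forall e a, e \in E -> a \in e -> u a ^+ m.-1 = \prod_(j in e :\ a) u j).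

Lemma stab_P (dd : {ffun 'I_n -> CC}) : stabilizing A i1 dd -> Pv dd.
Proof.
case=> Hnz _ Heq; split => // e a He Ha.
have [js [Hjs Hp]] := edge_js He Ha.
have := Heq a js; rewrite (A_edge He Hjs) Hp => H.
have H2 : cA * 1 = cA * ((dd a ^+ m.-1)^-1 * \prod_(j in e :\ a) dd j).
  by rewrite mulr1 {1}H mulrCA mulrA.
have H3 := mulfI cA_neq0 H2.
by rewrite -[LHS]mulr1 [in LHS]H3 mulrA divff ?mul1r // expf_neq0.
Qed.

Lemma conn_ind (Q : 'I_n -> Prop) :
  (forall a b, hadj E a b -> Q a -> Q b) -> forall a b, Q a -> Q b.
Proof.
move=> HQ a b Qa; have /connectP [p Hp ->] := Hc a b.
elim: p a Qa Hp => //= c p IH a Qa /andP [Hac Hp].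
exact: IH (HQ _ _ Hac Qa) Hp.
Qed.

Lemma hadjP a b : hadj E a b -> exists2 e, e \in E & a \in e /\ b \in e.
Proof. by move/existsP => [e /andP [He /andP [Ha Hb]]]; exists e. Qed.

Lemma Pv_edge u e a : Pv u -> e \in E -> a \in e -> u a ^+ m = \prod_(j in e) u j.
Proof.
move=> [_ Hu'] He Ha; rewrite (big_setD1 _ Ha) -(Hu' _ _ He Ha) /=.
by rewrite -exprS prednK // m_gt0.
Qed.

Lemma Pv_pow u : Pv u -> forall i j, u i ^+ m = u j ^+ m.
Proof.
move=> Pu i j; apply: (@conn_ind (fun j => u i ^+ m = u j ^+ m)) => // a b Hab ->.
have [e He [Ha Hb]] := hadjP Hab.
by rewrite (Pv_edge Pu He Ha) (Pv_edge Pu He Hb).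
Qed.

Lemma Pv_scale u c : Pv u -> c != 0 -> Pv (fun i => c * u i).
Proof.
move=> [Hnz Hu'] Hc0; split => [i|e a He Ha]; first by rewrite mulf_neq0.
rewrite big_split /= prodr_const (card_D1 He Ha) exprMn (Hu' _ _ He Ha) //.
Qed.


Section Log.
Variables (om : CC) (Hom : m.-primitive_root om).

Definition Sroots := mkseq (fun i => om ^+ i) m.
Definition lg (z : CC) : 'Z_m := inZp (index z Sroots).

Lemma Zcast : (Zp_trunc m).+2 = m. Proof. exact: Zp_cast. Qed.

Lemma Zm_lt (g : 'Z_m) : (g < m)%N.
Proof. by have := ltn_ord g; move: (nat_of_ord g); rewrite Zcast. Qed.

Lemma uniq_S : uniq Sroots.
Proof.
rewrite /Sroots /mkseq map_inj_in_uniq ?iota_uniq // => i j.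
rewrite !mem_iota !add0n => /andP [_ Hi] /andP [_ Hj] /eqP.
by rewrite (eq_prim_root_expr Hom) !modn_small // => /eqP.
Qed.

Lemma index_om i : (i < m)%N -> index (om ^+ i) Sroots = i.
Proof.
move=> Hi; have -> : om ^+ i = nth 0 Sroots i by rewrite nth_mkseq.
by rewrite index_uniq ?size_mkseq // uniq_S.
Qed.

Lemma lg_om (i : nat) : (i < m)%N -> val (lg (om ^+ i)) = i.
Proof. by move=> Hi; rewrite /lg index_om //= Zcast modn_small. Qed.

Lemma lg_omZ (g : 'Z_m) : lg (om ^+ g) = g.
Proof. by apply: val_inj; rewrite lg_om // Zm_lt. Qed.

Lemma omlg z : z ^+ m = 1 -> om ^+ (lg z) = z.
Proof. by move=> Hz; case: (prim_rootP Hom Hz) => i ->; rewrite lg_om. Qed.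

Lemma lg_inj z z' : z ^+ m = 1 -> z' ^+ m = 1 -> lg z = lg z' -> z = z'.
Proof. by move=> Hz Hz' H; rewrite -(omlg Hz) -(omlg Hz') H. Qed.

Lemma lgM z z' : z ^+ m = 1 -> z' ^+ m = 1 -> lg (z * z') = lg z + lg z'.
Proof.
move=> Hz Hz'; rewrite -{1}(omlg Hz) -{1}(omlg Hz') -exprD.
rewrite -(prim_expr_mod Hom).
have -> : ((lg z + lg z')%N %% m)%N = val (lg z + lg z') by rewrite /= Zcast.
exact: lg_omZ.
Qed.

Lemma lg1 : lg 1 = 0.
Proof. by apply: val_inj; rewrite -(expr0 om) lg_om // m_gt0. Qed.

End Log.

Section PF.
Variable vp : 'I_n -> CC.
Hypotheses (Hvp : rho_vecs A i1 vp) (Hpos : forall i, 0 < vp i).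
Local Notation rc := ((spectral_radius A)%:C)%C.

Lemma exists_max (f : 'I_n -> Rdefinitions.R) : exists i0, forall i, (f i <= f i0)%R.
Proof.
case: (@arg_maxP _ _ _ i1 xpredT f isT) => i0 _ H.
by exists i0 => i; exact: H.
Qed.

Lemma tapply_ge0 x i : (forall j, 0 <= x j) -> 0 <= tapply A x i.
Proof.
move=> Hx; apply: sumr_ge0 => js _; apply: mulr_ge0; first exact: A_ge0.
by apply: prodr_ge0 => k _.
Qed.

Lemma tapply_le x y i : (forall j, 0 <= x j <= y j) -> tapply A x i <= tapply A y i.
Proof.
move=> Hxy; apply: ler_sum => js _; apply: ler_wpM2l; first exact: A_ge0.
by apply: ler_prod => k _.
Qed.

Lemma tapply_scale c x i :
  tapply A (fun j => c * x j) i = c ^+ m.-1 * tapply A x i.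
Proof.
rewrite /tapply mulr_sumr; apply: eq_bigr => js _.
by rewrite big_split /= prodr_const card_ord mulrCA.
Qed.

Lemma tapply_norm y i : `|tapply A y i| <= tapply A (fun j => `|y j|) i.
Proof.
apply: le_trans (ler_norm_sum _ _ _) _; apply: ler_sum => js _.
by rewrite normrM normr_prod ger0_norm // A_ge0.
Qed.

Lemma rc_ge0 : 0 <= rc.
Proof.
have [[_ Hev] H1] := Hvp.
have := Hev i1; rewrite H1 expr1n mulr1 => <-.
by apply: tapply_ge0 => j; apply: ltW.
Qed.

Lemma vp1 : vp i1 = 1. Proof. by case: Hvp. Qed.

Lemma prod_eq_le (B : {set 'I_n}) (x y : 'I_n -> CC) b : b \in B ->
  (forall j, j \in B -> 0 <= x j <= y j) -> (forall j, j \in B -> 0 < y j) ->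
  \prod_(j in B) x j = \prod_(j in B) y j -> x b = y b.
Proof.
move=> Hb Hxy Hy; rewrite !(big_setD1 _ Hb) /= => Heq.
have /andP [Hx0 Hxb] := Hxy b Hb.
have HP : 0 < \prod_(j in B :\ b) y j.
  by apply: prodr_gt0 => j; rewrite in_setD1 => /andP [_ /Hy].
have HX : \prod_(j in B :\ b) x j <= \prod_(j in B :\ b) y j.
  by apply: ler_prod => j; rewrite in_setD1 => /andP [_ /Hxy].
apply/eqP; rewrite eq_le Hxb /=.
rewrite -(ler_pM2r HP) -Heq; apply: ler_wpM2l => //.
Qed.

Lemma re_le (x y : CC) : 0 <= x -> 0 <= y -> (complex.Re x <= complex.Re y)%R -> x <= y.
Proof.
move=> Hx Hy H; rewrite lecE H andbT.
by rewrite (ger0_Im Hx) (ger0_Im Hy).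
Qed.

Lemma abs_eq y : rho_vecs A i1 y -> forall i, `|y i| = vp i.
Proof.
move=> [[_ Hev] Hy1].
have [_ Hevp] := proj1 Hvp.
pose z i := `|y i|; pose r i := z i / vp i.
have Hr0 : forall i, 0 <= r i by move=> i; apply: divr_ge0; [exact: normr_ge0|exact: ltW (Hpos i)].
have [i0 Hi0] := exists_max (fun i => complex.Re (r i)).
set c := r i0.
have Hrc : forall i, r i <= c by move=> i; apply: re_le; [exact: Hr0|exact: Hr0|exact: Hi0].
have Hzc : forall i, z i <= c * vp i.
  move=> i; rewrite -(divfK (lt0r_neq0 (Hpos i)) (z i)); apply: ler_wpM2r; [exact: ltW (Hpos i)|exact: Hrc].
have Hc1 : 1 <= c by have := Hrc i1; rewrite /r /z Hy1 vp1 normr1 divr1.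
have Hc0 : 0 < c by apply: lt_le_trans Hc1; exact: ltr01.
pose Q j := z j = c * vp j.
have HQ : forall a b, hadj E a b -> Q a -> Q b.
  move=> a b Hab Qa; have [e He [Ha Hb]] := hadjP Hab.
  case: (eqVneq b a) => [-> // | Hba].
  have Hz0 : forall j, 0 <= z j <= c * vp j by move=> j; rewrite normr_ge0 Hzc.
  have Hsum : tapply A z a = tapply A (fun j => c * vp j) a.
    apply/eqP; rewrite eq_le tapply_le //= tapply_scale Hevp.
    have <- : rc * z a ^+ m.-1 = c ^+ m.-1 * (rc * vp a ^+ m.-1).
      by rewrite Qa exprMn mulrCA.
    have -> : rc * z a ^+ m.-1 = `|tapply A y a|.
      by rewrite Hev normrM normrX ger0_norm // rc_ge0.
    exact: tapply_norm.
  have [js [Hjs Hp]] := edge_js He Ha.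
  have Hle : forall js' : {ffun 'I_m.-1 -> 'I_n}, true ->
      `|A a js' * \prod_(k < m.-1) z (js' k)| <= A a js' * \prod_(k < m.-1) (c * vp (js' k)).
    move=> js' _; rewrite ger0_norm; last by apply: mulr_ge0; [exact: A_ge0|apply: prodr_ge0 => k _; exact: normr_ge0].
    apply: ler_wpM2l; first exact: A_ge0.
    by apply: ler_prod => k _; apply: Hz0.
  have HH := normC_sum_upper Hle Hsum.
  have := HH js isT.
  rewrite (A_edge He Hjs) (Hp z) (Hp (fun j => c * vp j)) => Hpr0.
  have Hpr := mulfI cA_neq0 Hpr0.
  apply: (prod_eq_le (B := e :\ a)) Hpr.
  - by rewrite in_setD1 Hba.
  - by move=> j _; apply: Hz0.
  - by move=> j _; apply: mulr_gt0.
have Qi0 : Q i0 by rewrite /Q /c /r divfK // lt0r_neq0.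
have Qall : forall j, Q j by move=> j; exact: (@conn_ind Q HQ i0 j Qi0).
have c1 : c = 1 by have := Qall i1; rewrite /Q /z Hy1 vp1 normr1 mulr1.
by move=> i; have := Qall i; rewrite /Q c1 mul1r.
Qed.

Lemma phase_P y : rho_vecs A i1 y ->
  Pv (fun i => y i / vp i) /\ y i1 / vp i1 = 1.
Proof.
move=> Hy; have Habs := abs_eq Hy; have [[_ Hev] Hy1] := Hy.
have [_ Hevp] := proj1 Hvp.
pose u i := y i / vp i.
have Hvp0 : forall i, vp i != 0 by move=> i; exact: lt0r_neq0 (Hpos i).
have Hy0 : forall i, y i != 0 by move=> i; rewrite -normr_eq0 Habs.
have Hyu : forall i, y i = u i * vp i by move=> i; rewrite /u divfK.
have Hun : forall i, `|u i| = 1.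
  by move=> i; rewrite /u normrM normfV Habs (ger0_norm (ltW (Hpos i))) divff.
split; last by rewrite Hy1 vp1 divr1.
split => [i|e a He Ha]; first by rewrite mulf_neq0 ?invr_eq0.
have [js [Hjs Hp]] := edge_js He Ha.
have HW : u a ^+ m.-1 != 0 by rewrite expf_neq0 // mulf_neq0 ?invr_eq0.
have HWn : `|u a ^+ m.-1| = 1 by rewrite normrX Hun expr1n.
set W := u a ^+ m.-1 in HW HWn *.
have Hle : forall js' : {ffun 'I_m.-1 -> 'I_n}, true ->
    `|W^-1 * (A a js' * \prod_(k < m.-1) y (js' k))| <= A a js' * \prod_(k < m.-1) vp (js' k).
  move=> js' _; rewrite normrM normfV HWn invr1 mul1r normrM ger0_norm ?A_ge0 //.
  rewrite normr_prod (eq_bigr _ (fun k _ => Habs (js' k))); exact: le_refl.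
have Hsum : \sum_(js' | true) W^-1 * (A a js' * \prod_(k < m.-1) y (js' k)) =
            \sum_(js' | true) A a js' * \prod_(k < m.-1) vp (js' k).
  rewrite -mulr_sumr; have -> : \sum_(js' | true) A a js' * \prod_(k < m.-1) y (js' k) = tapply A y a by [].
  have -> : \sum_(js' | true) A a js' * \prod_(k < m.-1) vp (js' k) = tapply A vp a by [].
  rewrite Hev Hevp Hyu exprMn mulrCA -/W mulKf //.
have HH := normC_sum_upper Hle Hsum.
have := HH js isT; rewrite (A_edge He Hjs) (Hp y) (Hp vp) => H.
have Hsplit : \prod_(j in e :\ a) y j = \prod_(j in e :\ a) u j * \prod_(j in e :\ a) vp j.
  by rewrite -big_split; apply: eq_bigr => j _; exact: Hyu.
have PV0 : \prod_(j in e :\ a) vp j != 0 by rewrite prodf_seq_neq0; apply/allP => j _; apply/implyP.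
rewrite Hsplit in H.
have H2 : (cA * \prod_(j in e :\ a) vp j) * (W^-1 * \prod_(j in e :\ a) u j) =
          (cA * \prod_(j in e :\ a) vp j) * 1.
  apply: etrans (_ : _ = W^-1 * (cA * (\prod_(j in e :\ a) u j * \prod_(j in e :\ a) vp j))) _.
    by ring.
  by rewrite H mulr1.
have H3 := mulfI (mulf_neq0 cA_neq0 PV0) H2.
apply: (mulfI (invr_neq0 HW)); by rewrite H3 mulVf.
Qed.

End PF.

Section PathPart.
Variables (d : nat) (vs : 'I_d.+1 -> 'I_n) (es : 'I_d -> {set 'I_n}).
Hypothesis Hp : is_path E vs es.

Definition pv (a : 'I_d) := vs (inord a).
Definition Piv := [set pv a | a : 'I_d].
Definition w := vs ord_max.
Definition Fs := (~: Piv) :\ w.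

Lemma ltd (a : 'I_d) : (a < d.+1)%N. Proof. exact: leqW (ltn_ord a). Qed.

Lemma vs_inj : injective vs. Proof. by case: Hp. Qed.

Lemma pv_inj : injective pv.
Proof.
move=> a b /vs_inj /(congr1 (@nat_of_ord _)); rewrite !inordK; [exact: val_inj|exact: leqW (ltn_ord _)..].
Qed.

Lemma w_notin : w \notin Piv.
Proof.
apply/negP => /imsetP [a _ /vs_inj].
move/(congr1 (@nat_of_ord _)); rewrite /= inordK; last exact: ltd.
move=> Ha.
by have := ltn_ord a; rewrite -Ha ltnn.
Qed.

Lemma card_Piv : #|Piv| = d.
Proof. by rewrite card_imset ?card_ord //; exact: pv_inj. Qed.

Lemma card_Fs : #|Fs| = (n - d - 1)%N.
Proof.
have := cardsD1 w (~: Piv); rewrite finset.in_setC w_notin /= add1n.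
have := cardsC Piv; rewrite card_Piv card_ord /Fs => Hc1 Hc2.
move: Hc1 Hc2; set x := #|_ :\ w|; set y := #|~: Piv|; lia.
Qed.

Lemma determine u u' : Pv u -> Pv u' ->
  (forall j, j \notin Piv -> u j = u' j) -> forall j, u j = u' j.
Proof.
move=> Pu Pu' Hag.
have Hw : u w = u' w by apply: Hag; exact: w_notin.
suff Hpiv : forall a, u (pv a) = u' (pv a).
  move=> j; case: (boolP (j \in Piv)) => [/imsetP [a _ ->] | /Hag //].
  exact: Hpiv.
have main : forall t (a : 'I_d), (d - a <= t)%N -> u (pv a) = u' (pv a).
  elim=> [|t IH] a Ht.
    by move: Ht; rewrite leqn0 subn_eq0 leqNgt ltn_ord.
  have [_ _ _ Hin Hnot] := Hp.
  have [Hpa _] := Hin a.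
  have Heq : forall j, j \in es a :\ pv a -> u j = u' j.
    move=> j; rewrite in_setD1 => /andP [Hjp Hje].
    case: (boolP (j \in Piv)) => [/imsetP [b _ Hjb] | /Hag //].
    subst j.
    have Hab : a != b by apply: contraNneq Hjp => ->.
    case: (ltngtP a b) => [Hlt | Hgt | /val_inj Heqab]; last by rewrite Heqab eqxx in Hab.
      apply: IH; have := ltn_ord b; move: Ht; clear -Hlt; lia.
    exfalso; move: Hje; apply/negP.
    have Hbd : (b < d.+1)%N by apply: ltnW; exact: ltn_ord.
    apply: (Hnot (inord b) a); rewrite inordK //.
    have := ltn_ord a; move: Hgt; clear; lia.
  have He := (match Hp with And5 H _ _ _ _ => H a end).
  have Hexp : forall v, Pv v -> v (pv a) = v w ^+ m / \prod_(j in es a :\ pv a) v j.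
    move=> v Pv'; have [Hnz Hv] := Pv'.
    rewrite -(Hv _ _ He Hpa) -(Pv_pow Pv' (pv a) w).
    by rewrite -{1}(prednK m_gt0) exprS mulfK // expf_neq0.
  rewrite (Hexp _ Pu) (Hexp _ Pu') Hw; congr (_ / _).
  by apply: eq_bigr => j Hj; apply: Heq.
by move=> a; apply: (main (d - a)%N).
Qed.

Lemma inj1 u u' : Pv u -> Pv u' -> u i1 = 1 -> u' i1 = 1 ->
  (forall f, f \in Fs -> u f / u w = u' f / u' w) -> forall j, u j = u' j.
Proof.
move=> Pu Pu' H1 H1' Hf.
have [Hnz _] := Pu; have [Hnz' _] := Pu'.
set c := u' w / u w.
have Hc0 : c != 0 by rewrite mulf_neq0 ?invr_eq0.
have Hall := determine (Pv_scale Pu Hc0) Pu'.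
have Hag : forall j, j \notin Piv -> c * u j = u' j.
  move=> j Hj; case: (eqVneq j w) => [-> | Hjw].
    by rewrite /c mulrAC -mulrA divff ?mulr1.
  have Hjf : j \in Fs by rewrite /Fs in_setD1 Hjw finset.in_setC.
  by rewrite /c mulrAC -mulrA Hf // mulrCA divff ?mulr1.
have Hc1 : c = 1 by have := Hall Hag i1; rewrite H1 H1' mulr1.
by move=> j; rewrite -(Hall Hag j) Hc1 mul1r.
Qed.


Variables (om : CC) (Hom : m.-primitive_root om).

Definition key (u : 'I_n -> CC) : 'rV['Z_m]_#|Fs| :=
  \row_(k < #|Fs|) lg om (u (enum_val k) / u w).

Lemma root_ratio u f : Pv u -> (u f / u w) ^+ m = 1.
Proof.
move=> Pu; have [Hnz _] := Pu.
by rewrite expr_div_n (Pv_pow Pu f w) divff // expf_neq0.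
Qed.

Lemma key_inj u u' : Pv u -> Pv u' -> u i1 = 1 -> u' i1 = 1 ->
  key u = key u' -> forall j, u j = u' j.
Proof.
move=> Pu Pu' H1 H1' Hk; apply: inj1 => // f Hf.
have := congr1 (fun M : 'rV['Z_m]_#|Fs| => M 0 (enum_rank_in Hf f)) Hk.
rewrite !mxE enum_rankK_in //; apply: lg_inj => //; exact: root_ratio.
Qed.

Lemma key_mul u u' : Pv u -> Pv u' ->
  key (fun i => u i * u' i) = key u + key u'.
Proof.
move=> Pu Pu'; apply/rowP => k; rewrite !mxE.
rewrite invfM mulrACA; apply: lgM => //; exact: root_ratio.
Qed.

Lemma card_Zm : #|'Z_m| = m.
Proof. by rewrite card_ord Zcast. Qed.

Lemma stab_part : stab_index_le A i1 (m ^ (n - d - 1)).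
Proof.
move=> s Us Hs.
have Hinj : {in s &, injective (fun x : {ffun 'I_n -> CC} => key x)}.
  move=> x y Hx Hy Hk; apply/ffunP => j.
  have [_ Hx1 _] := Hs _ Hx; have [_ Hy1 _] := Hs _ Hy.
  exact: (key_inj (stab_P (Hs _ Hx)) (stab_P (Hs _ Hy)) Hx1 Hy1 Hk).
have U2 := map_inj_in_uniq Hinj; rewrite -U2 in Us.
rewrite -(size_map (fun x : {ffun 'I_n -> CC} => key x)) -(card_uniqP Us).
apply: leq_trans (max_card _) _.
by rewrite card_mx card_Zm mul1n card_Fs.
Qed.

Lemma dim_part : stab_dim_le A i1 ((n - d - 1) * cl m).
Proof.
move=> vp Hvp Hpos k S Hsub Hstr.
pose Phi (y : 'I_n -> CC) := fun i => y i / vp i.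
pose K y := key (Phi y).
have Hvp0 : forall i, vp i != 0 by move=> i; exact: lt0r_neq0 (Hpos i).
have HPhi : forall y, rho_vecs A i1 y -> Pv (Phi y) /\ Phi y i1 = 1.
  by move=> y Hy; exact: (phase_P Hvp Hpos Hy).
have Kinj : forall y y', rho_vecs A i1 y -> rho_vecs A i1 y' -> K y = K y' -> y = y'.
  move=> y y' Hy Hy' HK; apply: funext => i.
  have [P1 e1] := HPhi y Hy; have [P2 e2] := HPhi y' Hy'.
  have := key_inj P1 P2 e1 e2 HK i; rewrite /Phi => /(congr1 (fun x => x * vp i)).
  by rewrite !divfK.
have Kcirc : forall y y', rho_vecs A i1 y -> rho_vecs A i1 y' ->
    K (circ vp y y') = K y + K y'.
  move=> y y' Hy Hy'; have [P1 _] := HPhi y Hy; have [P2 _] := HPhi y' Hy'.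
  rewrite /K -key_mul //; congr key; apply: funext => i.
  by rewrite /Phi /circ (abs_eq Hvp Hpos Hy) (abs_eq Hvp Hpos Hy') mulfK.
have K0 : K vp = 0.
  apply/rowP => i; rewrite !mxE /Phi !divff ?div1r ?invr1; [exact: lg1|exact: oner_neq0|exact: Hvp0|exact: Hvp0].
pose gT := 'rV['Z_m]_#|Fs|.
pose T j : {set gT} := [set g | `[< exists y, S j y /\ g = K y >]].
have memT : forall j g, reflect (exists y, S j y /\ g = K y) (g \in T j).
  by move=> j g; rewrite inE; apply: asboolP.
have Tgrp : forall j, (j <= k)%N -> group_set (T j).
  move=> j Hj; have [Hsb Hvpj Hcl] := Hsub j Hj; apply/group_setP; split.
    by apply/memT; exists vp; split => //; rewrite K0.
  move=> x y /memT [y1 [H1 ->]] /memT [y2 [H2 ->]]; apply/memT.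
  exists (circ vp y1 y2); split; first exact: Hcl.
  by rewrite Kcirc //; apply: Hsb.
have Tprop : forall j, (j < k)%N -> T j \proper T j.+1.
  move=> j Hj; have [Hs1 Hs2] := Hstr j Hj.
  have [y [Hy1 Hy2]] : exists y, S j.+1 y /\ ~ S j y.
    case: (pselect (exists y, S j.+1 y /\ ~ S j y)) => // Hno; exfalso.
    apply: Hs2 => y Hy; case: (pselect (S j y)) => // Hnn.
    by exfalso; apply: Hno; exists y.
  apply/fintype.properP; split.
    by apply/fintype.subsetP => g /memT [y' [H1 ->]]; apply/memT; exists y'; split => //; apply: Hs1.
  exists (K y); first by apply/memT; exists y.
  apply/memT => [[y' [H1 H2]]]; apply: Hy2.
  have [Hsb _ _] := Hsub j (ltnW Hj).
  have [Hsb' _ _] := Hsub j.+1 Hj.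
  by rewrite (Kinj y y' (Hsb' _ Hy1) (Hsb _ H1) H2).
have chain : forall j, (j <= k)%N -> (j <= cl #|T j|)%N.
  elim=> [|j IH] Hj //.
  have Hj' : (j <= k)%N by apply: ltnW.
  apply: leq_ltn_trans (IH Hj') _.
  have Hpr := Tprop j Hj.
  apply: cl_dvd_lt.
  - by apply/card_gt0P; exists 0%R; have /group_setP [H0 _] := Tgrp _ Hj.
  - exact: (@cardSg gT (Group (Tgrp _ Hj)) (Group (Tgrp _ Hj')) (proper_sub Hpr)).
  - exact: proper_card.
apply: leq_trans (chain k (leqnn k)) _.
have Hdv : (#|T k| %| #|gT|)%N.
  have := @cardSg gT [set: gT]%G (Group (Tgrp _ (leqnn k))) (finset.subsetT _).
  by rewrite cardsT.
apply: leq_trans (cl_dvd_le _ Hdv) _.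
  by rewrite card_mx card_Zm expn_gt0 m_gt0.
by rewrite card_mx card_Zm mul1n cl_exp ?m_gt0 // card_Fs.
Qed.

End PathPart.

End Main.

Local Close Scope ring_scope.

Theorem corollary4p15 (n m : nat) (Hn : (0 < n)%N) (Hm : (2 <= m)%N)
  (E : {set {set 'I_n}}) (d : nat) :
  @uniform n m E -> hconnected E -> max_path_length E d ->
  stab_index_le (@adj_tensor n m E) (Ordinal Hn) (m ^ (n - d - 1)) /\
  stab_dim_le (@adj_tensor n m E) (Ordinal Hn) ((n - d - 1) * cl m).
Proof.
move=> Hu Hc [[vs [es Hp]] _].
have [om Hom] := prim_exists (m_gt0 Hm).
split.
  exact: (@stab_part n m Hn Hm E Hu Hc d vs es Hp om Hom).
exact: (@dim_part n m Hn Hm E Hu Hc d vs es Hp om Hom).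
Qed.
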